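(* Let $G=(V,E)$ be a finite simple graph of order $n$ with adjacency matrix $A$ having eigenvalues $\lambda_1\ge\cdots\ge\lambda_n$, let $k\ge1$, and let $p\in\mathbb{R}_k[x]$. Set $W(p):=\max_{u\in V}(p(A))_{uu}$ and $w(p):=\min_{u\in V}(p(A))_{uu}$. Then $$\chi_{kq}(G)\ \ge\ \frac{n}{\min\{\,|\{i : p(\lambda_i)\ge w(p)\}|,\ |\{i : p(\lambda_i)\le W(p)\}|\,\}}.$$
   Context: $\mathbb{R}_k[x]$ denotes the real polynomials of degree at most $k$. $\mathrm{dist}(v,w)$ is the graph distance in $G$, $[c]=\{1,\dots,c\}$. A quantum $k$-distance $c$-coloring of $G$ is a collection of orthogonal projectors $\{P_{v,h} : v\in V, h\in[c]\}$ in $\mathbb{C}^{d\times d}$ (for some $d\ge 1$) with $\sum_{h\in[c]}P_{v,h}=I_d$ for each $v\in V$ and $P_{v,h}P_{w,h}=0$ for all distinct $v,w$ with $\mathrm{dist}(v,w)\le k$ and all $h$. The quantum $k$-distance chromatic number $\chi_{kq}(G)$ is the smallest $c$ for which such a coloring exists for some $d>0$; equivalently it is the quantum chromatic number of the $k$-th power graph $G^k$ (same vertex set, distinct vertices adjacent iff at distance at most $k$ in $G$). *)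

(* Defs.v *)
From HB Require Import structures.
From mathcomp Require Import all_boot all_order all_algebra.
From mathcomp Require Import reals.
From mathcomp.real_closed Require Import complex.
Set Implicit Arguments. Unset Strict Implicit. Unset Printing Implicit Defensive.
Import Order.TTheory GRing.Theory Num.Theory.
Local Open Scope ring_scope.

Definition simple_graph (n : nat) (e : rel 'I_n) : Prop :=
  symmetric e /\ irreflexive e.

Definition dist_le (n : nat) (e : rel 'I_n) (k : nat) (v w : 'I_n) : Prop :=
  exists s : seq 'I_n, [/\ path e v s, last v s = w & (size s <= k)%N].

Definition adjmx (R : numDomainType) (n : nat) (e : rel 'I_n) : 'M[R]_n :=
  \matrix_(i, j) (e i j)%:R.

Definition adjointmx (R : rcfType) (d : nat) (M : 'M[R[i]]_d) : 'M[R[i]]_d :=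
  (map_mx (@conjc R) M)^T.

Definition orth_proj (R : rcfType) (d : nat) (P : 'M[R[i]]_d) : Prop :=
  P *m P = P /\ adjointmx P = P.

Definition quantum_kdist_coloring (R : rcfType) (n : nat) (e : rel 'I_n)
    (k c d : nat) (P : 'I_n -> 'I_c -> 'M[R[i]]_d) : Prop :=
  [/\ (forall v h, orth_proj (P v h)),
      (forall v, \sum_(h < c) P v h = 1%:M) &
      (forall v w h, v != w -> dist_le e k v w -> P v h *m P w h = 0)].

Definition has_quantum_kdist_coloring (R : rcfType) (n : nat) (e : rel 'I_n)
    (k c : nat) : Prop :=
  exists d : nat, (0 < d)%N /\
    exists P : 'I_n -> 'I_c -> 'M[R[i]]_d, @quantum_kdist_coloring R n e k c d P.

Definition maxdiag (R : realDomainType) (n : nat) (M : 'M[R]_n) (u0 : 'I_n) : R :=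
  \big[Num.max/M u0 u0]_(u < n) M u u.
Definition mindiag (R : realDomainType) (n : nat) (M : 'M[R]_n) (u0 : 'I_n) : R :=
  \big[Num.min/M u0 u0]_(u < n) M u u.

Definition poly_mx (R : comNzRingType) (n : nat) (p : {poly R}) (M : 'M[R]_n)
  : 'M[R]_n := \sum_(i < size p) p`_i *: M ^+ i.

(* Main.v *)
Require Import Defs.
From HB Require Import structures.
From mathcomp Require Import all_boot all_order all_algebra.
From mathcomp Require Import reals.
From mathcomp Require Import sesquilinear spectral.
From mathcomp Require Import ring.
Import Order.TTheory GRing.Theory Num.Theory.
Local Open Scope ring_scope.
Local Open Scope sesquilinear_scope.

Lemma nonzero_sol (F : fieldType) (I J : finType) (Js : {set J})
    (Co : J -> I -> F) : (#|Js| < #|I|)%N ->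
  exists x : I -> F, (exists a, x a != 0) /\
    forall j, j \in Js -> \sum_a Co j a * x a = 0.
Proof.
move=> hlt.
pose K : 'M[F]_(#|I|, #|Js|) := \matrix_(a, b) Co (enum_val b) (enum_val a).
have hrk : (0 < \rank (kermx K))%N.
  by rewrite mxrank_ker subn_gt0; apply: leq_ltn_trans (rank_leq_col K) hlt.
have hK0 : kermx K != 0 by rewrite -mxrank_eq0 -lt0n.
have [i [b hib]] : exists i b, kermx K i b != 0.
  case: (boolP [exists i, exists b, kermx K i b != 0]).
    by move=> /existsP [i /existsP [b hb]]; exists i, b.
  rewrite negb_exists => /forallP hall; exfalso; move/negP: hK0; apply.
  apply/eqP/matrixP => i b; rewrite [RHS]mxE.
  move: (hall i); rewrite negb_exists => /forallP /(_ b).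
  by move/negPn/eqP.
exists (fun a => kermx K i (enum_rank a)); split.
  by exists (enum_val b); rewrite enum_valK.
move=> j hj.
have := mulmx_ker K; move=> /matrixP /(_ i (enum_rank_in hj j)).
rewrite !mxE => h; rewrite -[RHS]h (reindex enum_rank) /=; last first.
  by exists enum_val => x _; [rewrite enum_rankK | rewrite enum_valK].
by apply: eq_bigr => a _; rewrite [K _ _]mxE enum_rankK enum_rankK_in // mulrC.
Qed.


Lemma my_sum_neq0 {V : nmodType} {I : finType} {F : I -> V} :
  \sum_i F i != 0 -> exists i, F i != 0.
Proof.
move=> h; case: (boolP [exists i, F i != 0]) => [/existsP [i hi]|]; first by exists i.
rewrite negb_exists => /forallP hall; move: h; rewrite big1 ?eqxx // => i _.
by apply/eqP; rewrite -[_ == _]negbK hall.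
Qed.

Lemma walk_of_pow (R : numDomainType) n (e : rel 'I_n) i u v :
  (adjmx R e ^+ i) u v != 0 ->
  exists s, [/\ path e u s, last u s = v & size s = i].
Proof.
elim: i u => [|i IH] u.
  rewrite expr0 mxE; case: (eqVneq u v) => [->|]; last by rewrite mulr0n eqxx.
  by move=> _; exists [::].
rewrite exprS mxE => /my_sum_neq0 [w]; rewrite /adjmx mxE.
case euw: (e u w); last by rewrite mul0r eqxx.
rewrite mul1r => /IH [s [ps ls ss]].
by exists (w :: s); rewrite /= euw ps ls ss.
Qed.

Lemma poly_mx_support (R : numDomainType) n (e : rel 'I_n) k (p : {poly R}) u v :
  (size p <= k.+1)%N -> (poly_mx p (adjmx R e)) u v != 0 -> dist_le e k u v.
Proof.
move=> hp; rewrite /poly_mx summxE => /my_sum_neq0 [i]; rewrite mxE.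
have [->|hpi] := eqVneq p`_i 0; first by rewrite mul0r eqxx.
move=> h; have /walk_of_pow [s [ps ls ss]] : (adjmx R e ^+ i) u v != 0.
  by apply: contraNneq h => ->; rewrite mulr0.
exists s; split => //; rewrite ss -ltnS; exact: leq_trans (ltn_ord i) hp.
Qed.


Lemma card_count (T : finType) (P : pred T) : #|P| = count P (enum T).
Proof. by rewrite cardE /enum_mem size_filter filter_predT. Qed.

Lemma map_mxX (R S : nzRingType) (f : {rmorphism R -> S}) n (A : 'M[R]_n) i :
  map_mx f (A ^+ i) = (map_mx f A) ^+ i.
Proof.
elim: i => [|i IH]; first by rewrite !expr0 map_mx1.
by rewrite !exprS -!mulmxE map_mxM IH.
Qed.

From mathcomp.real_closed Require Import complex.
Import Order.TTheory GRing.Theory Num.Theory.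

Lemma pow_conj (C : numClosedFieldType) n (S : 'M[C]_n) (d : 'rV[C]_n) i :
  S *m S^t* = 1%:M -> S^t* *m S = 1%:M ->
  (S^t* *m diag_mx d *m S) ^+ i = S^t* *m diag_mx (map_mx (fun x => x ^+ i) d) *m S.
Proof.
move=> h1 h2; elim: i => [|i IH].
  rewrite expr0.
  have -> : map_mx (fun x => x ^+ 0) d = const_mx 1 by apply/matrixP => ? ?; rewrite !mxE.
  by rewrite diag_const_mx mulmx1 h2.
rewrite exprS IH -mulmxE.
rewrite !mulmxA -[_ *m S *m S^t*]mulmxA h1 mulmx1.
rewrite -[_ *m diag_mx d *m _]mulmxA; congr (_ *m _ *m _).
apply/matrixP => u v; rewrite mul_diag_mx !mxE.
by case: eqP => [->|]; rewrite ?mulr1n ?mulr0n ?mulr0 // exprS.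
Qed.

Lemma char_poly_similar (F : fieldType) n (S D : 'M[F]_n) :
  S \in unitmx -> char_poly (invmx S *m D *m S) = char_poly D.
Proof.
move=> hS; rewrite /char_poly /char_poly_mx.
set Sp := map_mx polyC S; set Sp' := map_mx polyC (invmx S).
have hSS : Sp' *m Sp = 1%:M by rewrite -map_mxM mulVmx // map_mx1.
have -> : 'X%:M - map_mx polyC (invmx S *m D *m S) =
          Sp' *m ('X%:M - map_mx polyC D) *m Sp.
  rewrite !map_mxM mulmxBr mulmxBl -/Sp -/Sp'; congr (_ - _).
  by rewrite scalar_mxC -mulmxA hSS mulmx1.
by rewrite !det_mulmx mulrC mulrA [\det Sp * _]mulrC -det_mulmx hSS det1 mul1r.
Qed.

Lemma spectral_data (R : rcfType) n (e : rel 'I_n) (hsym : symmetric e) (lam : seq R)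
  (hlam : char_poly (adjmx R e) = \prod_(l <- lam) ('X - l%:P)) :
  exists (S : 'M[R[i]]_n) (sp : 'I_n -> R),
   [/\ forall j u v, (((adjmx R e ^+ j) u v)%:C)%C =
            \sum_l (S l u)^* * (((sp l)%:C)%C ^+ j) * S l v,
       forall u v, ((u == v)%:R : R[i]) = \sum_l (S l u)^* * S l v &
       perm_eq [seq sp l | l <- enum 'I_n] lam ].
Proof.
set AR := adjmx R e; set AC := map_mx (real_complex R) AR.
have hAC : AC^t* = AC.
  apply/matrixP => u v; rewrite !mxE hsym; exact: conjc_real.
have hN : AC \is normalmx by apply/normalmxP; rewrite hAC.
have hdec := orthomx_spectralP hN.
set S := spectralmx AC in hdec; set d := spectral_diag AC in hdec.
have hU : S \is unitarymx := spectral_unitarymx AC.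
have hinv : invmx S = S^t* := invmx_unitary hU.
have h1 : S *m S^t* = 1%:M := unitarymxP hU.
have h2 : S^t* *m S = 1%:M by rewrite -hinv mulVmx // unitarymx_unit.
have hperm : perm_eq [seq d 0 i | i <- enum 'I_n] (map (real_complex R) lam).
  apply: prod_XsubC_eq; rewrite big_map.
  have -> : \prod_(x <- map (real_complex R) lam) ('X - x%:P) = char_poly AC.
    rewrite -map_char_poly hlam rmorph_prod big_map; apply: eq_bigr => l _.
    by rewrite rmorphB /= map_polyX map_polyC.
  rewrite hdec char_poly_similar ?unitarymx_unit // char_poly_trig ?diag_mx_is_trig //.
  rewrite big_enum /=; apply: eq_bigr => i _; rewrite mxE eqxx mulr1n //.
have hreal : forall i, exists r, d 0 i = ((r : R)%:C)%C.
  move=> i; have : d 0 i \in [seq d 0 i | i <- enum 'I_n] by apply: map_f; rewrite mem_enum.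
  by rewrite (perm_mem hperm) => /mapP [r _ ->]; exists r.
pose sp i := complex.Re (d 0 i).
have hd : forall i, ((sp i)%:C)%C = d 0 i.
  by move=> i; rewrite /sp; case: (hreal i) => r ->.
exists S, sp; split.
- move=> j u v.
  have -> : (((AR ^+ j) u v)%:C)%C = (AC ^+ j) u v by rewrite -map_mxX mxE.
  rewrite hdec hinv pow_conj // mul_mx_diag !mxE; apply: eq_bigr => l _.
  by rewrite !mxE hd.
- move=> u v; move/matrixP: h2 => /(_ u v); rewrite !mxE => <-.
  by apply: eq_bigr => l _; rewrite !mxE.
apply: (@perm_map_inj _ _ (real_complex R)); first exact: complexI.
by rewrite -map_comp (eq_map hd).
Qed.


Lemma K2 (C : numClosedFieldType) n d (M : 'I_n -> 'I_n -> C) (S : 'M[C]_n)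
    (L : 'I_n -> C) (Z : 'I_n -> 'I_d -> C) :
  (forall u v, M u v = \sum_i (S i u)^* * L i * S i v) ->
  \sum_u \sum_v M u v * \sum_j Z u j * (Z v j)^* =
  \sum_i L i * \sum_j (\sum_u (S i u)^* * Z u j) * (\sum_u (S i u)^* * Z u j)^*.
Proof.
move=> hM.
under eq_bigr => u _ do under eq_bigr => v _ do rewrite hM mulr_suml.
under eq_bigr => u _ do rewrite exchange_big /=.
rewrite exchange_big /=; apply: eq_bigr => i _.
rewrite mulr_sumr.
under eq_bigr => u _ do under eq_bigr => v _ do rewrite mulr_sumr.
under eq_bigr => u _ do rewrite exchange_big /=.
rewrite exchange_big /=; apply: eq_bigr => j _.
rewrite rmorph_sum mulr_suml mulr_sumr; apply: eq_bigr => u _.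
rewrite mulr_sumr mulr_sumr; apply: eq_bigr => v _.
rewrite rmorphM /=.
have -> : (S i v)^*^* = S i v := conjCK _.
ring.
Qed.


Lemma K1 (C : numClosedFieldType) n c d (P : 'I_n -> 'I_c -> 'M[C]_d)
    (x : 'I_n -> 'I_d -> C) u v :
  (forall v h a b, (P v h a b)^* = P v h b a) ->
  \sum_h \sum_j (\sum_l x u l * P u h l j) * (\sum_l x v l * P v h l j)^* =
  \sum_l \sum_m x u l * (x v m)^* * (\sum_h P u h *m P v h) l m.
Proof.
move=> hP.
under [RHS]eq_bigr => l _ do under eq_bigr => m _ do rewrite summxE mulr_sumr.
under [RHS]eq_bigr => l _ do rewrite exchange_big /=.
rewrite [RHS]exchange_big /=; apply: eq_bigr => h _.
under [RHS]eq_bigr => l _ do under eq_bigr => m _ do rewrite mxE mulr_sumr.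
under [RHS]eq_bigr => l _ do rewrite exchange_big /=.
rewrite [RHS]exchange_big /=; apply: eq_bigr => j _.
rewrite rmorph_sum mulr_suml; apply: eq_bigr => l _.
rewrite mulr_sumr; apply: eq_bigr => m _.
rewrite rmorphM /= hP; ring.
Qed.


Lemma F4 (R : rcfType) n (A : 'M[R]_n) (S : 'M[R[i]]_n) (sp : 'I_n -> R)
    (p : {poly R}) (a : R) :
  (forall j u v, (((A ^+ j) u v)%:C)%C =
            \sum_l (S l u)^* * (((sp l)%:C)%C ^+ j) * S l v) ->
  (forall u v, ((u == v)%:R : R[i]) = \sum_l (S l u)^* * S l v) ->
  forall u v, real_complex R (poly_mx p A u v - a * ((u == v)%:R)) =
    \sum_l (S l u)^* * (((p.[sp l] - a)%:C)%C) * S l v.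
Proof.
move=> F1 F2 u v.
rewrite rmorphB rmorphM /= rmorph_nat F2 /poly_mx summxE rmorph_sum.
have -> : \sum_l (S l u)^* * ((p.[sp l] - a)%:C)%C * S l v =
   \sum_l (S l u)^* * ((p.[sp l])%:C)%C * S l v - \sum_l (S l u)^* * (a%:C)%C * S l v.
  by rewrite -sumrB; apply: eq_bigr => l _; rewrite rmorphB /=; ring.
congr (_ - _); last first.
  by rewrite mulr_sumr; apply: eq_bigr => l _; ring.
under [RHS]eq_bigr => l _ do rewrite horner_coef rmorph_sum mulr_sumr mulr_suml.
rewrite [RHS]exchange_big /=; apply: eq_bigr => i _.
rewrite mxE rmorphM /= (F1 i u v) mulr_sumr; apply: eq_bigr => l _.
rewrite rmorphM rmorphXn /=; ring.
Qed.


Lemma core (R : rcfType) n (e : rel 'I_n) (hG : simple_graph e) (lam : seq R)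
    (hlam : char_poly (adjmx R e) = \prod_(l <- lam) ('X - l%:P))
    k (p : {poly R}) (hp : (size p <= k.+1)%N) c
    (hc : has_quantum_kdist_coloring R e k c)
    (a : R) (ha : forall u, a <= poly_mx p (adjmx R e) u u) :
  (n <= c * count (fun l => (a <= p.[l])%R) lam)%N.
Proof.
have [S [sp [F1 F2 hperm]]] := @spectral_data R n e (proj1 hG) lam hlam.
case: hc => d [hd [P [hproj hsum hdisj]]].
set pA := poly_mx p (adjmx R e) in ha *.
pose M u v : R[i] := real_complex R (pA u v - a * (u == v)%:R).
pose L l : R := p.[sp l] - a.
have hM : forall u v, M u v = \sum_l (S l u)^* * real_complex R (L l) * S l v.
  exact: (@F4 R n _ S sp p a F1 F2).
have hP : forall v h x y, (P v h x y)^* = P v h y x.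
  by move=> v h x y; have [_ /matrixP /(_ y x)] := hproj v h; rewrite !mxE.
set G := [set l | a <= p.[sp l]].
have hcount : #|G| = count (fun l => a <= p.[l]) lam.
  rewrite card_count -(permP hperm) [in RHS]count_map; apply: eq_count => i.
  by rewrite /= -[pred_of_set G i]/(i \in G) inE.
rewrite -hcount leqNgt; apply/negP => hlt.
pose Js := setX (setX [set: 'I_c] G) [set: 'I_d].
pose Co (t : ('I_c * 'I_n) * 'I_d) (s : 'I_n * 'I_d) :=
  (S t.1.2 s.1)^* * P s.1 t.1.1 s.2 t.2.
have hcard : (#|Js| < #|{: 'I_n * 'I_d}|)%N.
  by rewrite !cardsX !cardsT card_prod !card_ord ltn_pmul2r.
have [x [[s0 hx0] hx]] := @nonzero_sol _ _ _ Js Co hcard.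
pose X u l := x (u, l).
pose Z h u j := \sum_l X u l * P u h l j.
pose Y h i j := \sum_u (S i u)^* * Z h u j.
have hY0 : forall h i j, i \in G -> Y h i j = 0.
  move=> h i j hi; rewrite -(hx ((h, i), j)); last first.
    by move: hi; rewrite !inE /= => ->.
  rewrite [RHS](eq_bigr (fun s => Co (h, i, j) (s.1, s.2) * x (s.1, s.2))); last by case.
  rewrite -(pair_bigA _ (fun u l => Co (h, i, j) (u, l) * x (u, l))) /=.
  apply: eq_bigr => u _; rewrite /Z mulr_sumr; apply: eq_bigr => l _.
  by rewrite /Co /X /=; ring.
pose Q h := \sum_u \sum_v M u v * \sum_j Z h u j * (Z h v j)^*.
have hQ : forall h, Q h =
    \sum_i real_complex R (L i) * \sum_j Y h i j * (Y h i j)^*.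
  move=> h; exact: (@K2 _ n d M S (fun i => real_complex R (L i)) (Z h) hM).
have hPP : forall u, \sum_h P u h *m P u h = 1%:M.
  by move=> u; under eq_bigr => h _ do rewrite (proj1 (hproj u h)); exact: hsum.
have hsumQ : \sum_h Q h = \sum_u M u u * \sum_l X u l * (X u l)^*.
  rewrite /Q exchange_big /=; apply: eq_bigr => u _.
  rewrite exchange_big /=.
  under eq_bigr => v _ do rewrite -mulr_sumr.
  rewrite (bigD1 u) //= [X in _ + X]big1 ?addr0.
    congr (_ * _).
    rewrite (@K1 _ n c d P X u u hP) hPP.
    apply: eq_bigr => l _; rewrite (bigD1 l) //= mxE eqxx mulr1 big1 ?addr0 //.
    by move=> m hm; rewrite mxE eq_sym (negbTE hm) mulr0.
  move=> v hvu; have huv : u != v by rewrite eq_sym.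
  have [->|hM0] := eqVneq (M u v) 0; first by rewrite mul0r.
  have hpA : pA u v != 0.
    by apply: contraNneq hM0 => h0; rewrite /M h0 (negbTE huv) mulr0 subr0 rmorph0.
  have hdist := @poly_mx_support R n e k p u v hp hpA.
  have hz : \sum_h P u h *m P v h = 0 by apply: big1 => h _; exact: hdisj.
  rewrite (@K1 _ n c d P X u v hP) hz big1 ?mulr0 // => l _.
  by rewrite big1 // => m _; rewrite mxE mulr0.
have hrc0 : forall r : R, (0 <= real_complex R r) = (0 <= r).
  by move=> r; rewrite -(rmorph0 (real_complex R)) lecR.
have hrcle0 : forall r : R, (real_complex R r <= 0) = (r <= 0).
  by move=> r; rewrite -(rmorph0 (real_complex R)) lecR.
have hge : 0 <= \sum_h Q h.
  rewrite hsumQ; apply: sumr_ge0 => u _; apply: mulr_ge0.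
    by rewrite /M eqxx mulr1 hrc0 subr_ge0.
  by apply: sumr_ge0 => l _; exact: mul_conjC_ge0.
have hterm : forall h i, real_complex R (L i) * \sum_j Y h i j * (Y h i j)^* <= 0.
  move=> h i; case: (boolP (i \in G)) => hi.
    by rewrite big1 ?mulr0 // => j _; rewrite hY0 // mul0r.
  apply: mulr_le0_ge0; last by apply: sumr_ge0 => j _; exact: mul_conjC_ge0.
  by rewrite hrcle0 /L subr_le0; move: hi; rewrite inE -ltNge => /ltW.
have hle : forall h, Q h <= 0.
  by move=> h; rewrite hQ; apply: sumr_le0 => i _; exact: hterm.
have hQ0 : forall h, Q h = 0.
  have hs : \sum_h (- Q h) = 0.
    rewrite sumrN; apply/eqP; rewrite oppr_eq0 eq_le hge andbT.
    by apply: sumr_le0 => h _; exact: hle.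
  move=> h; apply/eqP; rewrite -oppr_eq0; apply/eqP.
  by apply: (psumr_eq0P _ hs) => // h' _; rewrite oppr_ge0.
have hYall : forall h i j, Y h i j = 0.
  move=> h i j; case: (boolP (i \in G)) => hi; first exact: hY0.
  have hs : \sum_i0 (- (real_complex R (L i0) * \sum_j Y h i0 j * (Y h i0 j)^*)) = 0.
    by rewrite sumrN -hQ hQ0 oppr0.
  have h1 := @psumr_eq0P _ _ predT _ (fun i0 _ => etrans (oppr_ge0 _) (hterm h i0)) hs i isT.
  move/eqP: h1; rewrite oppr_eq0 mulf_eq0 => /orP [].
    rewrite fmorph_eq0 /L subr_eq0 => /eqP heq.
    by move: hi; rewrite inE heq lexx.
  move=> /eqP hs2.
  have h2 := @psumr_eq0P _ _ predT _ (fun j0 _ => mul_conjC_ge0 (Y h i j0)) hs2 j isT.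
  by move/eqP: h2; rewrite mul_conjC_eq0 => /eqP.
have hZ : forall h v j, Z h v j = 0.
  move=> h v j.
  have <- : \sum_i S i v * Y h i j = Z h v j.
    transitivity (\sum_u (u == v)%:R * Z h u j).
      rewrite /Y; under eq_bigr => i _ do rewrite mulr_sumr.
      rewrite exchange_big /=; apply: eq_bigr => u _.
      by rewrite (F2 u v) mulr_suml; apply: eq_bigr => i _; ring.
    rewrite (bigD1 v) //= eqxx mul1r big1 ?addr0 // => u hu.
    by rewrite (negbTE hu) mul0r.
  by rewrite big1 // => i _; rewrite hYall mulr0.
have hX : forall u l, X u l = \sum_h Z h u l.
  move=> u l.
  transitivity (\sum_m X u m * (\sum_h P u h) m l).
    rewrite hsum (bigD1 l) //= mxE eqxx mulr1 big1 ?addr0 // => m hm.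
    by rewrite mxE (negbTE hm) mulr0.
  rewrite /Z exchange_big /=; apply: eq_bigr => m _.
  by rewrite summxE mulr_sumr.
move: hx0; case: s0 => u l; rewrite -/(X u l) hX big1 ?eqxx // => h _.
Qed.

Local Close Scope sesquilinear_scope.

Lemma poly_mxN (R : comNzRingType) n (p : {poly R}) (M : 'M[R]_n) :
  poly_mx (- p) M = - poly_mx p M.
Proof.
rewrite /poly_mx size_polyN -sumrN; apply: eq_bigr => i _.
by rewrite coefN scaleNr.
Qed.

Theorem theorem4p1 (R : realType) (n : nat) (hn : (0 < n)%N) (e : rel 'I_n)
    (hG : simple_graph e) (lam : seq R)
    (hlam : char_poly (adjmx R e) = \prod_(l <- lam) ('X - l%:P))
    (k : nat) (hk : (1 <= k)%N) (p : {poly R}) (hp : (size p <= k.+1)%N)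
    (c : nat) (hc : has_quantum_kdist_coloring R e k c) :
  let pA := poly_mx p (adjmx R e) in
  let W := maxdiag pA (Ordinal hn) in
  let w := mindiag pA (Ordinal hn) in
  (n%:R / (minn (count (fun l => w <= p.[l]) lam)
                (count (fun l => p.[l] <= W) lam))%:R <= (c%:R : R)).
Proof.
cbv zeta.
set pA := poly_mx p (adjmx R e).
set W := maxdiag pA _. set w := mindiag pA _.
have hw : forall u, w <= pA u u by move=> u; exact: bigmin_le.
have hW : forall u, pA u u <= W.
  move=> u; rewrite /W /maxdiag; exact: (le_bigmax _ (fun u0 => pA u0 u0) u).
have h1 := @core R n e hG lam hlam k p hp c hc w hw.
have h2 : (n <= c * count (fun l => (p.[l] <= W)%R) lam)%N.
  have hp' : (size (- p) <= k.+1)%N by rewrite size_polyN.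
  have hW' : forall u, - W <= poly_mx (- p) (adjmx R e) u u.
    by move=> u; rewrite poly_mxN mxE lerN2.
  have := @core R n e hG lam hlam k (- p) hp' c hc (- W) hW'.
  by rewrite (eq_count (a2 := fun l => p.[l] <= W)) // => l; rewrite hornerN lerN2.
set m := minn _ _.
have hm : (n <= c * m)%N by rewrite /m /minn; case: ifP.
have [->|hm0] := eqVneq m 0%N; first by rewrite invr0 mulr0 ler0n.
by rewrite ler_pdivrMr ?ltr0n ?lt0n // -natrM ler_nat.
Qed.
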